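(* Let $F:[0,1]\to\mathbb R$ be measurable. Assume that for each $\varepsilon>0$ there is a countable collection $(S_j)_j$ of pairwise disjoint measurable subsets of $[0,1]$ such that $\sum_j\mathrm{meas}(S_j)\geq1-\varepsilon$ and, for each $j$ and each $y\in S_j$, $$\mathrm{meas}(\{x\in S_j\colon F(x)=F(y)\})\leq\varepsilon\,\mathrm{meas}(S_j).$$ Then the cumulative distribution function of $F_\ast(\nu)$ is continuous, where $\nu$ is Lebesgue measure on $[0,1]$.
   Context: $\mathrm{meas}$ denotes Lebesgue measure. *)

(* Defs.v *)
From HB Require Import structures.
From mathcomp Require Import all_boot all_order all_algebra.
From mathcomp Require Import all_classical all_reals all_analysis.
Set Implicit Arguments. Unset Strict Implicit. Unset Printing Implicit Defensive.
Import Order.TTheory GRing.Theory Num.Theory.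
Local Open Scope classical_set_scope.
Local Open Scope ring_scope.

Definition nu01 (R : realType) : set R -> \bar R :=
  mrestr (@lebesgue_measure R) (measurable_itv `[(0:R), 1]).

Definition cdf_push (R : realType) (F : R -> R) (t : R) : R :=
  fine (pushforward (@nu01 R) F `]-oo, t]).

(* Main.v *)
Require Import Defs.
From HB Require Import structures.
From mathcomp Require Import all_boot all_order all_algebra.
From mathcomp Require Import all_classical all_reals all_analysis.
From mathcomp Require Import lra.
Import Order.TTheory GRing.Theory Num.Theory.
Import numFieldNormedType.Exports.
Local Open Scope classical_set_scope.
Local Open Scope ring_scope.

Section S.
Variable R : realType.
Local Notation L := (@lebesgue_measure R).
Local Notation D := ([set` `[(0:R), 1]] : set R).

Lemma LD : L D = 1%:E.
Proof. rewrite lebesgue_measure_itv /=. rewrite lte_fin ltr01 -EFinD subr0 //. Qed.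

Lemma fin_sub X : measurable X -> X `<=` D -> exists r : R, L X = r%:E /\ 0 <= r <= 1.
Proof.
move=> mX XD.
have h1 : (L X <= 1%:E)%E by rewrite -LD; apply: le_measure; rewrite ?inE.
have h0 : (0 <= L X)%E by apply: measure_ge0.
move: h0 h1; case: (L X) => [r| |] //= h0 h1; exists r; split => //.
by rewrite -!lee_fin h0 h1.
Qed.

Lemma atom (F : R -> R) (mF : measurable_fun `[(0:R), 1] F) :
  (forall eps : R, 0 < eps ->
     exists S : nat -> set R,
       [/\ (forall j, measurable (S j)),
           (forall j, S j `<=` `[(0:R), 1]),
           trivIset setT S,
           ((1 - eps)%:E <= \sum_(0 <= j <oo) (@lebesgue_measure R) (S j))%E &
           (forall j y, S j y ->
              ((@lebesgue_measure R) [set x | S j x /\ F x = F y]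
               <= eps%:E * (@lebesgue_measure R) (S j))%E)]) ->
  forall c, L (D `&` F @^-1` [set c]) = 0%E.
Proof.
move=> H c.
set A := D `&` F @^-1` [set c].
have mD : measurable D := measurable_itv _.
have mA : measurable A := mF mD _ (measurable_set1 c).
apply/eqP; rewrite eq_le measure_ge0 andbT.
apply/lee_addgt0Pr => e e0; rewrite add0e.
have e20 : 0 < e / 2 by rewrite divr_gt0.
have [S [mS SD tS sumS HS]] := H (e/2) e20.
set U := \bigcup_j S j.
have mU : measurable U := bigcupT_measurable _ mS.
have UD : U `<=` D by move=> x [j _ /SD].
have LU : L U = (\sum_(0<=j<oo) L (S j))%E.
  rewrite measure_bigcup//=; last by move=> i _; exact: mS.
  by apply/congr_lim/funext => n; apply: eq_bigl => i; rewrite in_setT.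
have [u [Lu u01]] := fin_sub _ mU UD.
have [a [La a01]] := fin_sub _ (measurableD mD mU) (fun x (h : (D `\` U) x) => h.1).
have h1 : 1%:E = (a + u)%:E.
  rewrite EFinD -La -Lu -{2}(setIidr UD) -LD -measureDI //.
have h2 : ((1 - e/2)%:E <= u%:E)%E by rewrite -Lu LU.
have hAU : (L (A `&` U) <= (e/2 * u)%:E)%E.
  rewrite setI_bigcupr measure_bigcup//=; first last.
  - exact: (@trivIset_setIl _ _ _ _ (fun _ => A)).
  - by move=> i _; apply: measurableI; [exact: mA|exact: mS].
  rewrite (_ : (\sum_(0<=j<oo | j \in [set: nat]) L (A `&` S j) = \sum_(0<=j<oo) L (A `&` S j))%E); last first.
    by apply/congr_lim/funext => n; apply: eq_bigl => i; rewrite in_setT.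
  apply: (@le_trans _ _ (\sum_(0 <= j <oo) ((e/2)%:E * L (S j)))%E).
    apply: lee_nneseries => [i _ _|j _]; first exact: measure_ge0.
    case: (pselect (exists y, (A `&` S j) y)) => [[y [[Dy Fy] Sy]]|no].
      apply: le_trans (HS j y Sy); apply: le_measure; rewrite ?inE.
      - by apply: measurableI; [exact: mA|exact: mS].
      - have -> : [set x | S j x /\ F x = F y] = S j `&` (D `&` F @^-1` [set F y]).
          by apply/seteqP; split=> x /=; [move=> [Sx Fx]; split; [exact: Sx|split; [exact: SD Sx|exact: Fx]]|move=> [Sx [_ Fx]]].
        by apply: measurableI; [exact: mS|exact: (mF mD _ (measurable_set1 _))].
      - by move=> x [[_ Fx] Sx]; split => //; rewrite Fx Fy.
    have -> : A `&` S j = set0.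
      by apply/seteqP; split=> x //= h; apply: no; exists x.
    by rewrite measure0; apply: mule_ge0 => //; rewrite lee_fin ltW.
  rewrite nneseriesZl; last by move=> i _; exact: measure_ge0.
  by rewrite EFinM -LU Lu.
have hAD : (L (A `\` U) <= a%:E)%E.
  rewrite -La; apply: le_measure; rewrite ?inE; try exact: measurableD.
  by move=> x [[Dx _] nU]; split.
rewrite (measureDI L mA mU).
apply: le_trans (leeD hAD hAU) _.
rewrite -EFinD lee_fin.
move: h1 h2; rewrite !lee_fin => /eqP; rewrite eqe => /eqP h1 h2.
nra.
Qed.

Lemma mono_fine X Y : measurable X -> measurable Y -> Y `<=` D -> X `<=` Y ->
  fine (L X) <= fine (L Y).
Proof.
move=> mX mY YD XY.
have [x [Lx _]] := fin_sub _ mX (subset_trans XY YD).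
have [y [Ly _]] := fin_sub _ mY YD.
rewrite Lx Ly /= -lee_fin -Lx -Ly; apply: le_measure; rewrite ?inE //.
Qed.

Lemma cdf_diff (F : R -> R) (mF : measurable_fun `[(0:R), 1] F) a b : a <= b ->
  cdf_push F b - cdf_push F a = fine (L (D `&` F @^-1` `]a, b])).
Proof.
move=> ab; rewrite /cdf_push /pushforward /nu01 /mrestr.
have mD : measurable D := measurable_itv _.
have mP c : measurable (F @^-1` `]-oo, c] `&` D).
  by rewrite setIC; exact: (mF mD _ (measurable_itv _)).
have mQ : measurable (D `&` F @^-1` `]a, b]) := mF mD _ (measurable_itv _).
have [pa [La _]] := fin_sub _ (mP a) (@subIsetr _ _ _).
have [pb [Lb _]] := fin_sub _ (mP b) (@subIsetr _ _ _).
have [q [Lq _]] := fin_sub _ mQ (@subIsetl _ _ _).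
rewrite La Lb Lq /=.
have h : L (F @^-1` `]-oo, b] `&` D) = (L (D `&` F @^-1` `]a, b]) + L (F @^-1` `]-oo, a] `&` D))%E.
rewrite (measureDI L (mP b) (mP a)).
have -> : (F @^-1` `]-oo, b] `&` D) `&` (F @^-1` `]-oo, a] `&` D) = F @^-1` `]-oo, a] `&` D.
  apply/seteqP; split=> x /=; first by case.
  move=> [Fa Dx]; split => //; split => //.
  move: Fa; rewrite /= !in_itv /= => Fa; exact: le_trans ab.
have -> : (F @^-1` `]-oo, b] `&` D) `\` (F @^-1` `]-oo, a] `&` D) = D `&` F @^-1` `]a, b].
  apply/seteqP; split=> x /=.
    move=> [[Fb Dx] nFa]; split => //; move: Fb nFa; rewrite /= !in_itv /= => Fb.
    move=> h; rewrite Fb andbT ltNge; apply/negP => Fa; apply: h; split => //.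
  move=> [Dx]; rewrite !in_itv /= => /andP[aF Fb]; split.
    by split => //; rewrite Fb.
  by move=> [Fa _]; move: aF; rewrite ltNge Fa.
  by [].
move: h; rewrite La Lb Lq -EFinD => /eqP; rewrite eqe => /eqP ->.
by rewrite addrK.
Qed.

Lemma main (F : R -> R) (mF : measurable_fun `[(0:R), 1] F) :
  (forall c, L (D `&` F @^-1` [set c]) = 0%E) ->
  continuous (cdf_push F : R -> R).
Proof.
move=> at0 t0; have [t ->] : exists t : R, t0 = t by exists t0.
apply/cvgrPdist_lt => e e0.
have mD : measurable D := measurable_itv _.
pose G n := D `&` F @^-1` `]t - n.+1%:R^-1, t + n.+1%:R^-1].
have mG n : measurable (G n) := mF mD _ (measurable_itv _).
have capG : \bigcap_n G n = D `&` F @^-1` [set t].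
  apply/seteqP; split => x.
    move=> Gx; have [Dx _] := Gx 0%N I; split => //=.
    apply/eqP; rewrite eq_le; apply/andP; split.
      rewrite leNgt; apply/negP => /ltr_add_invr [k hk].
      have [_] := Gx k I; rewrite /= in_itv /= => /andP[_ Fk]. by move: (le_lt_trans Fk hk); rewrite ltxx.
    rewrite leNgt; apply/negP => /ltr_add_invr [k hk].
    have [_] := Gx k I; rewrite /= in_itv /= => /andP[Fk _].
    by move: hk Fk; move: (k.+1%:R^-1) => dd hk Fk; lra.
  move=> [Dx Fx] n _; split => //; rewrite /= in_itv /=; rewrite /= in Fx; rewrite Fx.
  have : 0 < n.+1%:R^-1 :> R by rewrite invr_gt0 ltr0n.
  move: (n.+1%:R^-1) => dd h; apply/andP; split; lra.
have cvgG : (L \o G) @ \oo --> L (\bigcap_n G n).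
  apply: nonincreasing_cvg_mu => //.
  - have [r [Lr _]] := fin_sub _ (mG 0%N) (@subIsetl _ _ _).
    exact: (eq_ind_r (fun z => z < +oo)%E (ltry r) Lr).
  - exact: bigcapT_measurable.
  - move=> n m nm; apply/subsetPset => x [Dx]; rewrite /= in_itv /= => /andP[a b].
    split => //; rewrite /= in_itv /=.
    have hmn : m.+1%:R^-1 <= n.+1%:R^-1 :> R by rewrite lef_pV2 ?posrE ?ler_nat.
    move: hmn a b; move: (m.+1%:R^-1) (n.+1%:R^-1) => u v hmn a b.
    apply/andP; split; lra.
rewrite capG at0 in cvgG.
move/fine_cvgP: cvgG => [_ fcvg].
have := cvgr_lt _ fcvg _ e0.
move=> [N _ /(_ _ (leqnn N)) HN].
apply/nbhs_ballP; exists (N.+1%:R^-1) => //= s; rewrite /ball /= => hs.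
have HN' : fine (L (G N)) < e by exact: HN.
have d0 : 0 < N.+1%:R^-1 :> R by rewrite invr_gt0 ltr0n.
move: hs; rewrite ltr_norml => /andP[hs1 hs2].
case: (leP t s) => ts.
  rewrite -opprB normrN (cdf_diff F mF _ _ ts) ger0_norm; last by apply: fine_ge0; exact: measure_ge0.
  apply: le_lt_trans HN'; apply: mono_fine => //.
  - exact: (mF mD _ (measurable_itv _)).
  - exact: subIsetl.
  move=> x [Dx]; rewrite /= !in_itv /= => /andP[tF Fs]; split => //.
  rewrite /= in_itv /=; move: (N.+1%:R^-1) hs1 hs2 d0 => dd hs1 hs2 d0.
  apply/andP; split; lra.
rewrite (cdf_diff F mF _ _ (ltW ts)) ger0_norm; last by apply: fine_ge0; exact: measure_ge0.
apply: le_lt_trans HN'; apply: mono_fine => //.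
- exact: (mF mD _ (measurable_itv _)).
- exact: subIsetl.
move=> x [Dx]; rewrite /= !in_itv /= => /andP[tF Fs]; split => //.
rewrite /= in_itv /=; move: (N.+1%:R^-1) hs1 hs2 d0 => dd hs1 hs2 d0.
apply/andP; split; lra.
Qed.
End S.

Theorem lemma3p6 (R : realType) (F : R -> R) :
  measurable_fun `[(0:R), 1] F ->
  (forall eps : R, 0 < eps ->
     exists S : nat -> set R,
       [/\ (forall j, measurable (S j)),
           (forall j, S j `<=` `[(0:R), 1]),
           trivIset setT S,
           ((1 - eps)%:E <= \sum_(0 <= j <oo) (@lebesgue_measure R) (S j))%E &
           (forall j y, S j y ->
              ((@lebesgue_measure R) [set x | S j x /\ F x = F y]
               <= eps%:E * (@lebesgue_measure R) (S j))%E)]) ->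
  continuous (cdf_push F : R -> R).
Proof.
move=> mF H; exact: (@main R F mF (@atom R F mF H)).
Qed.
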